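(* Let $n\ge 2$ and $1\le k\le n-1$ be integers, $T>0$, and $t\in\{1,\dots,n\}$. Let $X_1,\dots,X_n$ be independent random variables each uniformly distributed on $[0,T]$, and let $$Y_{t,2}=\min\Big(X_t,\ \max\big(\mathrm{mink}(\{X_i\}_{i\neq t})\big)\Big),$$ where $\max(\mathrm{mink}(\{X_i\}_{i\neq t}))$ denotes the $k$-th smallest of the $n-1$ values $X_i$, $i\ne t$. Then $$E[Y_{t,2}]=\frac{T}{2}-\frac{(n-k)(n-k+1)T}{2n(n+1)}.$$
   Context: In an $(n,k,m)$ systematic MDS array code stored on $n$ nodes (any $k$ nodes recover all data), $X_i$ is the access latency of node $i$; $Y_{t,2}$ is the data access latency of the proposed accelerated access algorithms (AAKL/AAUL) for the data of node $t$: the minimum of directly reading node $t$ and reading the fastest $k$ nodes other than $t$ and decoding. *)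

(* Defs.v *)
From HB Require Import structures.
From mathcomp Require Import all_boot all_order all_algebra.
From mathcomp Require Import all_classical all_reals all_analysis.
Set Implicit Arguments. Unset Strict Implicit. Unset Printing Implicit Defensive.
Import Order.TTheory GRing.Theory Num.Theory.
Local Open Scope ring_scope.
Local Open Scope classical_set_scope.

(* Mutual independence of a finite family of real random variables:
   the joint law factorizes on every family of Borel sets
   (taking B j = setT for j outside a subfamily gives every subfamily). *)
Definition mutually_independent d (Omega : measurableType d) (R : realType)
  (P : probability Omega R) (n : nat) (X : 'I_n -> {RV P >-> R}) : Prop :=
  forall B : 'I_n -> set R, (forall i, measurable (B i)) ->
    P [set w | forall i, B i (X i w)] = (\prod_(i < n) P (X i @^-1` B i))%E.

Definition uniform_on_0T d (Omega : measurableType d) (R : realType)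
  (P : probability Omega R) (T : R) (hT : 0 < T) (X : {RV P >-> R}) : Prop :=
  forall A : set R, measurable A -> distribution P X A = uniform_prob hT A.

Definition kth_smallest (R : realType) (k : nat) (s : seq R) : R :=
  nth 0 (sort <=%R s) k.-1.

Definition Y_t2 d (Omega : measurableType d) (R : realType)
  (P : probability Omega R) (n k : nat) (X : 'I_n -> {RV P >-> R}) (t : 'I_n)
  : Omega -> R :=
  fun w => Num.min (X t w) (kth_smallest k [seq X i w | i <- enum 'I_n & i != t]).

(* Main.v *)
Require Import Defs.
From HB Require Import structures.
From mathcomp Require Import all_boot all_order all_algebra.
From mathcomp Require Import all_classical all_reals all_analysis.
From mathcomp Require Import ring lra zify.
From mathcomp Require Import measurable_realfun.
Import Order.TTheory GRing.Theory Num.Theory.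
Local Open Scope ring_scope.

Lemma sorted_nth_gt (R : realType) (s : seq R) (k : nat) (x : R) :
  (0 < k <= size s)%N ->
  (x < nth 0 (sort <=%R s) k.-1) = (count (fun y : R => (y <= x)%R) s < k)%N.
Proof.
move=> /andP[k0 ks].
set ss := sort <=%R s.
have sss : sorted <=%R ss by apply: sort_sorted; exact: le_total.
have szs : size ss = size s by rewrite size_sort.
have cnt : count (fun y => y <= x) ss = count (fun y => y <= x) s.
  by apply/permP; rewrite perm_sort.
rewrite -cnt.
have hk : (k.-1 < size ss)%N by rewrite szs prednK.
case: (ltrP x (nth 0 ss k.-1)) => hx.
- apply/esym; apply/idP.
  have hd : count (fun y => y <= x) (drop k.-1 ss) = 0%N.
    apply/eqP; rewrite -leqn0 leqNgt -has_count; apply/negP => /(has_nthP 0) [i].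
    rewrite size_drop nth_drop => hi.
    have : nth 0 ss k.-1 <= nth 0 ss (k.-1 + i).
      apply: le_sorted_leq_nth => //; rewrite ?inE //; first by rewrite -ltn_subRL.
      exact: leq_addr.
    move=> h1 h2; have := le_trans h1 h2; by rewrite leNgt hx.
  rewrite -(cat_take_drop k.-1 ss) count_cat hd addn0.
  apply: leq_ltn_trans (count_size _ _) _.
  by rewrite size_take hk prednK.
- apply/esym; apply/negbTE; rewrite -leqNgt.
  have ha : all (fun y => y <= x) (take k ss).
    apply/(all_nthP 0) => i; rewrite size_take.
    have -> : (if (k < size ss)%N then k else size ss) = k.
      by case: ifP => // /negbT; rewrite -leqNgt => h; apply/eqP; rewrite eqn_leq h szs ks.
    move=> ik; rewrite nth_take //.
    apply: le_trans hx.
    apply: le_sorted_leq_nth => //; rewrite ?inE //; try exact: leq_ltn_trans hk.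
      by apply: leq_trans ik _; rewrite szs.
    by rewrite -ltnS prednK.
  rewrite -[in X in (_ <= X)%N](cat_take_drop k ss) count_cat.
  apply: leq_trans (leq_addr _ _).
  move: ha; rewrite all_count => /eqP ->.
  rewrite size_take; case: ifP => // /negbT; rewrite -leqNgt => h.
  by rewrite szs.
Qed.

Lemma count_others (R : realType) n (a : 'I_n -> R) (t : 'I_n) (x : R) :
  count (fun y : R => (y <= x)%R) [seq a i | i <- enum 'I_n & i != t] =
  #|[set i | (i != t) && (a i <= x)]|.
Proof.
rewrite count_map count_filter cardsE cardE -size_filter.
rewrite -deprecated_filter_index_enum enumT.
rewrite /index_enum -enumT; congr size; apply: eq_filter => i /=.
by rewrite andbC.
Qed.

Lemma size_others (R : realType) n (a : 'I_n -> R) (t : 'I_n) :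
  size [seq a i | i <- enum 'I_n & i != t] = n.-1.
Proof.
rewrite size_map size_filter.
have := cardC1 t. rewrite card_ord => <-.
by rewrite cardE -size_filter -deprecated_filter_index_enum enumT.
Qed.

Lemma subC1E n (t : 'I_n) (S : {set 'I_n}) : (S \subset [set~ t]) = (t \notin S).
Proof.
apply/fintype.subsetP/idP => [h|h i iS]; first by apply/negP => /h; rewrite !inE eqxx.
by rewrite !inE; apply/eqP => eit; rewrite -eit iS in h.
Qed.

Lemma regroup (R : numDomainType) n k (t : 'I_n) (g : nat -> R) :
  \sum_(S : {set 'I_n} | (t \notin S) && (#|S| < k)%N) g #|S| =
  \sum_(j < k) 'C(n.-1, j)%:R * g j.
Proof.
case: k => [|k].
  by rewrite big_ord0 big1 // => S /andP[_]; rewrite ltn0.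
rewrite (partition_big (fun S : {set 'I_n} => (inord #|S| : 'I_k.+1)) xpredT) //=.
apply: eq_bigr => j _.
rewrite (eq_bigr (fun=> g j)); last first.
  by move=> S /andP[/andP[_ Sk] /eqP <-]; rewrite inordK.
pose P := (fun S : {set 'I_n} => (t \notin S) && (#|S| < k.+1)%N && (inord #|S| == j)).
rewrite -/(P _).
have -> : \sum_(S | P S) g j = (#|[set S | P S]|)%:R * g j.
  rewrite -sum1_card natr_sum big_distrl /=.
  by apply: eq_big => [S|S _]; rewrite ?inE ?mul1r.
congr (_%:R * _).
have jk := ltn_ord j.
rewrite -[n in n.-1]card_ord -(cardsC1 t) -cards_draws; apply: eq_card => S.
rewrite !inE subC1E /P; case: (t \notin S) => //=.
apply/andP/eqP => [[Sk /eqP <-]|Sj]; first by rewrite inordK.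
split; first by rewrite Sj.
by apply/eqP/val_inj; rewrite /= inordK Sj.
Qed.

Lemma prod_if (R : comNzRingType) n (S : {set 'I_n}) (u v : R) :
  \prod_(i < n) (if i \in S then u else v) = u ^+ #|S| * v ^+ (n - #|S|).
Proof.
rewrite (bigID (fun i => i \in S)) /=.
rewrite (eq_bigr (fun=> u)); last by move=> i ->.
rewrite [X in _ * X](eq_bigr (fun=> v)); last by move=> i /negbTE ->.
rewrite !prodr_const; congr (_ * _ ^+ _).
have h := cardsC S; rewrite card_ord in h.
transitivity #|~: S|; first by apply: eq_card => i; rewrite !inE.
by rewrite -[X in (X - _)%N]h addKn.
Qed.

Set Implicit Arguments. Unset Strict Implicit. Unset Printing Implicit Defensive.
Lemma Ygt (R : realType) n k (a : 'I_n -> R) (t : 'I_n) (x : R) : (0 < k <= n.-1)%N ->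
  (x < Num.min (a t) (kth_smallest k [seq a i | i <- enum 'I_n & i != t])) =
  (x < a t) && (#|[set i | (i != t) && (a i <= x)%R]| < k)%N.
Proof.
move=> hk; rewrite /kth_smallest lt_min sorted_nth_gt ?count_others //.
by rewrite size_others.
Qed.

Definition Bset (R : realType) n (S : {set 'I_n}) (x : R) (i : 'I_n) : set R :=
  if i \in S then `]-oo, x]%classic else `]x, +oo[%classic.

Lemma BsetE (R : realType) n (S : {set 'I_n}) (x : R) (i : 'I_n) y :
  Bset S x i y <-> (if i \in S then y <= x else x < y).
Proof. by rewrite /Bset; case: (i \in S) => /=; rewrite in_itv /= ?andbT. Qed.

Lemma Bset_uniq (R : realType) n (S S' : {set 'I_n}) (x : R) (a : 'I_n -> R) :
  (forall i, Bset S x i (a i)) -> (forall i, Bset S' x i (a i)) -> S = S'.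
Proof.
move=> h h'; apply/setP => i; have /BsetE := h i; have /BsetE := h' i.
case: (i \in S); case: (i \in S') => //= h1 h2.
  by have := lt_le_trans h1 h2; rewrite ltxx.
by have := lt_le_trans h2 h1; rewrite ltxx.
Qed.

Lemma Ygt_ex (R : realType) n k (a : 'I_n -> R) (t : 'I_n) (x : R) : (0 < k <= n.-1)%N ->
  (x < Num.min (a t) (kth_smallest k [seq a i | i <- enum 'I_n & i != t])) <->
  exists S : {set 'I_n}, ((t \notin S) && (#|S| < k)%N) /\ forall i, Bset S x i (a i).
Proof.
move=> hk; rewrite Ygt //; split.
  move=> /andP[xt ck]; exists [set i | (i != t) && (a i <= x)]; split.
    by rewrite ck inE eqxx.
  move=> i; apply/BsetE; rewrite inE.
  case: eqP => [->|_] /=; first by [].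
  by case: leP.
move=> [S [/andP[tS Sk] h]].
have xt : x < a t by have /BsetE := h t; rewrite (negbTE tS).
rewrite xt /=; apply: leq_ltn_trans Sk; apply: subset_leq_card.
apply/fintype.subsetP => i; rewrite inE => /andP[it ax].
have /BsetE := h i; case: (i \in S) => // xa.
by have := lt_le_trans xa ax; rewrite ltxx.
Qed.

Definition Eset d (Omega : measurableType d) (R : realType) n
  (X : 'I_n -> Omega -> R) (S : {set 'I_n}) (x : R) : set Omega :=
  [set w | forall i, Bset S x i (X i w)].

Lemma Y_preimage d (Omega : measurableType d) (R : realType) (P : probability Omega R)
  n k (X : 'I_n -> {RV P >-> R}) (t : 'I_n) (x : R) : (0 < k <= n.-1)%N ->
  (Y_t2 k X t @^-1` `]x, +oo[ =
  \bigcup_(S in [set S : {set 'I_n} | (t \notin S) && (#|S| < k)%N]) Eset (fun i => X i : Omega -> R) S x)%classic.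
Proof.
move=> hk; apply/seteqP; split => w /=.
  rewrite in_itv /= andbT => /(Ygt_ex (fun i => X i w) t x hk) [S [hS h]].
  by exists S.
move=> [S hS h]; rewrite in_itv /= andbT; apply/(Ygt_ex (fun i => X i w) t x hk).
by exists S.
Qed.

Lemma Eset_meas d (Omega : measurableType d) (R : realType) (P : probability Omega R)
  n (X : 'I_n -> {RV P >-> R}) (S : {set 'I_n}) (x : R) :
  measurable (Eset (fun i => X i : Omega -> R) S x).
Proof.
have -> : Eset (fun i => X i : Omega -> R) S x = (\bigcap_(i in [set: 'I_n]) (X i @^-1` Bset S x i))%classic.
  by apply/seteqP; split => w /= h i; [move=> _; exact: h | exact: h].
apply: fin_bigcap_measurable; first exact: finite_finset.
move=> i _; apply: measurable_funPTI.
by rewrite /Bset; case: (i \in S); exact: measurable_itv.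
Qed.

Lemma mY d (Omega : measurableType d) (R : realType) (P : probability Omega R)
  n k (X : 'I_n -> {RV P >-> R}) (t : 'I_n) : (0 < k <= n.-1)%N ->
  measurable_fun setT (Y_t2 k X t).
Proof.
move=> hk; apply: (measurability _ (measurable_realfun.RGenOInfty.measurableE R)) => //.
move=> _ [_ [x ->] <-]; rewrite setTI Y_preimage //.
apply: fin_bigcup_measurable; first exact: finite_finset.
by move=> S _; exact: Eset_meas.
Qed.

Lemma unif_itv (R : realType) (T : R) (hT : 0 < T) (A : set R) (a b : R) :
  measurable A -> 0 <= a <= b -> b <= T ->
  (A `&` `[0, T] = `[a, b] \/ A `&` `[0, T] = `]a, b])%classic ->
  uniform_prob hT A = ((b - a) / T)%:E.
Proof.
move=> mA /andP[a0 ab] bT hA.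
rewrite /uniform_prob integral_uniform_pdf.
have e : forall D, (D `<=` `[0, T])%classic -> measurable D ->
   (\int[lebesgue_measure]_(x in D) (uniform_pdf 0 T x)%:E = (T^-1)%:E * lebesgue_measure D)%E.
  move=> D DT mD; rewrite -integral_cst //; apply: eq_integral => x /[!inE] /DT.
  by rewrite /= in_itv /= /uniform_pdf => ->; rewrite subr0.
case: hA => ->.
  rewrite e //; last by move=> x /=; rewrite !in_itv /= => /andP[h1 h2]; rewrite (le_trans a0 h1) (le_trans h2 bT).
  rewrite lebesgue_measure_itv /= lte_fin; case: ltP => h.
    by rewrite -EFinB -EFinM mulrC.
  have -> : b = a by apply/eqP; rewrite eq_le ab h.
  by rewrite subrr mul0r mule0.
  rewrite e //; last by move=> x /=; rewrite !in_itv /= => /andP[h1 h2]; rewrite (le_trans a0 (ltW h1)) (le_trans h2 bT).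
  rewrite lebesgue_measure_itv /= lte_fin; case: ltP => h.
    by rewrite -EFinB -EFinM mulrC.
  have -> : b = a by apply/eqP; rewrite eq_le ab h.
  by rewrite subrr mul0r mule0.
Qed.

Lemma unif_null (R : realType) (T : R) (hT : 0 < T) (A : set R) :
  (A `&` `[0, T] = set0)%classic -> uniform_prob hT A = 0%E.
Proof. by move=> hA; rewrite /uniform_prob integral_uniform_pdf hA integral_set0. Qed.

Lemma PX d (Omega : measurableType d) (R : realType) (P : probability Omega R)
  (T : R) (hT : 0 < T) (X : {RV P >-> R}) (A : set R) :
  uniform_on_0T hT X -> measurable A -> P (X @^-1` A)%classic = uniform_prob hT A.
Proof. by move=> hu mA; rewrite -hu. Qed.

Lemma PX_le d (Omega : measurableType d) (R : realType) (P : probability Omega R)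
  (T : R) (hT : 0 < T) (X : {RV P >-> R}) (x : R) :
  uniform_on_0T hT X -> 0 <= x <= T -> P (X @^-1` `]-oo, x])%classic = (x / T)%:E.
Proof.
move=> hu /andP[x0 xT]; rewrite (PX hu (measurable_itv _)).
rewrite (@unif_itv _ _ _ _ 0 x) ?subr0 ?lexx ?x0 //.
left; apply/seteqP; split => y /=; rewrite !in_itv /=.
  by move=> [-> /andP[->]].
by move=> /andP[y0 yx]; rewrite yx y0 (le_trans yx xT).
Qed.

Lemma PX_gt d (Omega : measurableType d) (R : realType) (P : probability Omega R)
  (T : R) (hT : 0 < T) (X : {RV P >-> R}) (x : R) :
  uniform_on_0T hT X -> 0 <= x <= T -> P (X @^-1` `]x, +oo[)%classic = (1 - x / T)%:E.
Proof.
move=> hu /andP[x0 xT]; rewrite (PX hu (measurable_itv _)).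
rewrite (@unif_itv _ _ _ _ x T) ?x0 ?xT ?lexx //.
  by rewrite mulrBl divff // gt_eqF.
right; apply/seteqP; split => y /=; rewrite !in_itv /= andbT.
  by move=> [-> /andP[]].
by move=> /andP[xy ->]; rewrite xy (le_trans x0 (ltW xy)).
Qed.

Lemma PX_neg d (Omega : measurableType d) (R : realType) (P : probability Omega R)
  (T : R) (hT : 0 < T) (X : {RV P >-> R}) :
  uniform_on_0T hT X -> P (X @^-1` `]-oo, 0[)%classic = 0%E.
Proof.
move=> hu; rewrite (PX hu (measurable_itv _)).
apply: unif_null; apply/seteqP; split => y //=; rewrite !in_itv /= => -[].
by move=> y0 /andP[y0' _]; have := lt_le_trans y0 y0'; rewrite ltxx.
Qed.

Lemma PX_big d (Omega : measurableType d) (R : realType) (P : probability Omega R)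
  (T : R) (hT : 0 < T) (X : {RV P >-> R}) (x : R) :
  uniform_on_0T hT X -> T <= x -> P (X @^-1` `]x, +oo[)%classic = 0%E.
Proof.
move=> hu xT; rewrite (PX hu (measurable_itv _)).
apply: unif_null; apply/seteqP; split => y //=; rewrite !in_itv /= andbT => -[].
by move=> xy /andP[_ yT]; have := lt_le_trans xy (le_trans yT xT); rewrite ltxx.
Qed.

Lemma sum_nat_id n k : (k <= n)%N ->
  (2 * (\sum_(j < k) (n - j)) + (n - k) * (n - k + 1) = n * (n + 1))%N.
Proof.
elim: k => [|k IH] hk; first by rewrite big_ord0 muln0 add0n subn0.
rewrite big_ord_recr /= mulnDr -addnA.
have -> : (2 * (n - k) + (n - k.+1) * (n - k.+1 + 1) = (n - k) * (n - k + 1))%N.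
  have e : (n - k = (n - k.+1).+1)%N by lia.
  rewrite e; move: (n - k.+1)%N => a; nia.
by rewrite IH // ltnW.
Qed.

Lemma term_nat m j : (j <= m)%N ->
  ('C(m, j) * (j`! * (m.+1 - j)`!) * (m.+1 * (m.+1 + 1)) = (m.+1 - j) * (m.+1).+1`!)%N.
Proof.
move=> jm.
have e : (m.+1 - j = (m - j).+1)%N by rewrite subSn.
rewrite e factS.
have hb := bin_fact jm.
rewrite [(m.+2)`!]factS [(m.+1)`!]factS -hb addn1.
ring.
Qed.

Lemma final_alg (R : realFieldType) n k (T : R) : (2 <= n)%N -> (1 <= k <= n - 1)%N ->
  T * \sum_(j < k) 'C(n.-1, j)%:R * ((j`! * (n - j)`!)%:R / (j + (n - j)).+1`!%:R) =
  T / 2 - ((n - k) * (n - k + 1))%:R * T / (2 * n * (n + 1))%:R.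
Proof.
case: n => [//|m] hn /andP[k1 km].
have kn : (k <= m.+1)%N by lia.
have N0 : ((m.+1 * (m.+1 + 1))%:R : R) != 0 by rewrite pnatr_eq0 muln_eq0.
rewrite (eq_bigr (fun j : 'I_k => (m.+1 - j)%:R / (m.+1 * (m.+1 + 1))%:R)); last first.
  move=> j _.
  have jm : (j <= m)%N by have := ltn_ord j; lia.
  rewrite subnKC; last by lia.
  have F0 : ((m.+1).+1`!%:R : R) != 0 by rewrite pnatr_eq0 -lt0n fact_gt0.
  rewrite mulrA -natrM; apply/eqP; rewrite eqr_div // -!natrM eqr_nat /=.
  by rewrite term_nat.
rewrite -big_distrl /= -natr_sum.
have h := sum_nat_id kn.
set S := (\sum_(j < k) (m.+1 - j))%N in h *.
set M := ((m.+1 - k) * (m.+1 - k + 1))%N in h *.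
have hR : (2 * S%:R + M%:R = (m.+1 * (m.+1 + 1))%:R :> R).
  by rewrite -h natrD natrM.
rewrite (_ : (2 * m.+1 * (m.+1 + 1))%:R = 2 * (m.+1 * (m.+1 + 1))%:R :> R); last first.
  by rewrite -mulnA natrM.
rewrite -hR; rewrite -hR in N0.
field.
by rewrite N0.
Qed.

Lemma P_event d (Omega : measurableType d) (R : realType) (P : probability Omega R)
  n k (T : R) (hT : 0 < T) (t : 'I_n) (X : 'I_n -> {RV P >-> R}) (u : R) :
  (0 < k <= n.-1)%N -> mutually_independent X -> (forall i, uniform_on_0T hT (X i)) ->
  0 <= u <= 1 ->
  P (Y_t2 k X t @^-1` `]T * u, +oo[)%classic =
  (\sum_(j < k) 'C(n.-1, j)%:R * (u ^+ j * (1 - u) ^+ (n - j)))%:E.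
Proof.
move=> hk ind hu /andP[u0 u1].
have Tu : 0 <= T * u <= T.
  by apply/andP; split; [apply: mulr_ge0; [exact: ltW|] | apply: ler_piMr; [exact: ltW|]].
have TuT : T * u / T = u by rewrite mulrC mulKf // gt_eqF.
rewrite (@Y_preimage _ _ _ P n k X t (T * u) hk) measure_fin_bigcup //; first last.
- by move=> S _; exact: Eset_meas.
- by move=> S S' _ _ [w [h1 h2]]; exact: Bset_uniq h1 h2.
- exact: finite_finset.
transitivity (\sum_(S \in [set S : {set 'I_n} | (t \notin S) && (#|S| < k)%N]%classic)
   ((u ^+ #|S| * (1 - u) ^+ (n - #|S|))%:E))%E.
  apply: eq_fsbigr => S _.
  have mB : forall i, measurable (Bset S (T * u) i).
    by move=> i; rewrite /Bset; case: (i \in S); exact: measurable_itv.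
  etransitivity; first exact: (ind _ mB).
  rewrite (eq_bigr (fun i => (if i \in S then u else 1 - u)%:E)); last first.
    move=> i _; rewrite /Bset; case: (i \in S).
      by rewrite (PX_le (hu i)) // TuT.
    by rewrite (PX_gt (hu i)) // TuT.
  by rewrite prodEFin prod_if.
pose Pp : {pred {set 'I_n}} := fun S => (t \notin S) && (#|S| < k)%N.
have -> : [set S : {set 'I_n} | (t \notin S) && (#|S| < k)%N]%classic = [set` Pp]%classic by [].
rewrite -(bigfs _ (r := index_enum _)); last 2 first.
- exact: index_enum_uniq.
- by move=> S _; rewrite mem_index_enum.
rewrite sumEFin; congr (_%:E).
by rewrite -(@regroup _ n k t (fun j => u ^+ j * (1 - u) ^+ (n - j))).
Qed.

Lemma int_mon (R : realType) a b :
  (\int[@lebesgue_measure R]_(u in `[0%R, 1%R]) (u ^+ a * (1 - u) ^+ b)%:E)%E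
  = ((a`! * b`!)%:R / (a + b).+1`!%:R)%:E.
Proof.
rewrite -beta_fun_fact EFin_beta_fun integral_mkcond /=.
apply: eq_integral => x _.
by rewrite /patch; case: ifP.
Qed.

Lemma int_poly (R : realType) n k :
  (\int[@lebesgue_measure R]_(u in `[0%R, 1%R]) (\sum_(j < k) 'C(n.-1, j)%:R * (u ^+ j * (1 - u) ^+ (n - j)))%:E)%E
   = (\sum_(j < k) 'C(n.-1, j)%:R * ((j`! * (n - j)`!)%:R / (j + (n - j)).+1`!%:R))%:E.
Proof.
under eq_integral do rewrite -sumEFin.
rewrite ge0_integral_sum //; first last.
- move=> j x; rewrite /= in_itv /= => /andP[x0 x1]; rewrite lee_fin.
  by rewrite mulr_ge0 // mulr_ge0 // exprn_ge0 // subr_ge0.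
- move=> j; apply/measurable_EFinP; apply: measurable_funM => //.
  apply: measurable_funM; first exact: measurable_funX.
  by apply: measurable_funX; apply: measurable_funB.
rewrite -sumEFin; apply: eq_bigr => j _.
under eq_integral do rewrite EFinM.
rewrite ge0_integralZl //; first by rewrite int_mon EFinM.
- apply/measurable_EFinP; apply: measurable_funM; first exact: measurable_funX.
  by apply: measurable_funX; apply: measurable_funB.
- move=> x; rewrite /= in_itv /= => /andP[x0 x1]; rewrite lee_fin.
  by rewrite mulr_ge0 // exprn_ge0 // subr_ge0.
Qed.


Unset Implicit Arguments.

Theorem corollary4 (d : measure_display) (Omega : measurableType d) (R : realType)
  (P : probability Omega R) (n k : nat) (T : R) (hT : 0 < T) (t : 'I_n)
  (X : 'I_n -> {RV P >-> R}) :
  (2 <= n)%N -> (1 <= k <= n - 1)%N ->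
  mutually_independent X ->
  (forall i, uniform_on_0T hT (X i)) ->
  ('E_P[Y_t2 k X t] =
     (T / 2 - ((n - k) * (n - k + 1))%:R * T / (2 * n * (n + 1))%:R)%:E)%E.
Proof.
move=> hn hk1 ind hu.
have hk : (0 < k <= n.-1)%N by rewrite -subn1.
have mYf := mY X t hk.
pose V := fun w => Num.max (Y_t2 k X t w) 0 * T^-1.
have mV : measurable_fun setT V.
  apply: measurable_funM; last exact: measurable_cst.
  by apply: measurable_maxr => //; exact: measurable_cst.
have VP : V \in mfun by rewrite inE.
pose VR : {RV P >-> R} := mfun_Sub VP.
have VRE : forall w, VR w = V w by move=> w; rewrite /VR mfun_valP.
have V0 : forall w, 0 <= V w.
  by move=> w; rewrite /V mulr_ge0 // ?le_max ?lexx ?orbT // invr_ge0 ltW.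
have Ynn : forall w, (forall i, 0 <= X i w) -> 0 <= Y_t2 k X t w.
  move=> w h; rewrite /Y_t2 le_min h /=.
  rewrite /kth_smallest.
  have hall : all (fun y => 0 <= y) (sort <=%R [seq X i w | i <- enum 'I_n & i != t]).
    rewrite all_sort; apply/allP => y /mapP [i _ ->]; exact: h.
  move/(all_nthP 0): hall; apply.
  rewrite size_sort size_others.
  by case/andP: hk => k0 kn; rewrite prednK.
have ae : ae_eq P setT (fun w => (Y_t2 k X t w)%:E) (fun w => (T%:E * (V w)%:E)%E).
  apply: (@negligibleS _ _ _ P (\big[setU/set0]_(i < n) (X i @^-1` `]-oo, 0[)%classic)).
    move=> w /= hw; apply: contrapT => hnot; apply: hw => _.
    have h : forall i, 0 <= X i w.
      move=> i; rewrite leNgt; apply/negP => Xi; apply: hnot.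
      by rewrite (bigD1 i) //=; left; rewrite /= in_itv /=.
    rewrite -EFinM; congr (_%:E); rewrite /V max_l; last exact: Ynn.
    by rewrite mulrC mulfVK // gt_eqF.
  elim/big_ind: _ => [|A B hA hB|i _]; [exact: negligible_set0 | exact: negligibleU |].
  apply/negligibleP; first exact: measurable_funPTI.
  exact: (PX_neg (hu i)).
rewrite unlock.
rewrite (ae_eq_integral _ _ measurableT _ _ ae); first last.
- rewrite (_ : (fun w => (T%:E * (V w)%:E)%E) = (fun w => (T * V w)%:E)); last first.
    by apply/funext => w; rewrite EFinM.
  apply/measurable_EFinP; apply: measurable_funM => //; exact: measurable_cst.
- exact/measurable_EFinP.
rewrite ge0_integralZl //; first last.
- by rewrite lee_fin ltW.
- by move=> w _; rewrite lee_fin.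
- exact/measurable_EFinP.
have -> : (\int[P]_w (V w)%:E = 'E_P[VR])%E.
  by rewrite expectation_def; apply: eq_integral => w _; rewrite VRE.
rewrite ge0_expectation_ccdf; last by move=> w; rewrite VRE.
have pre : forall r, 0 <= r ->
    (VR @^-1` `]r, +oo[ = Y_t2 k X t @^-1` `]T * r, +oo[)%classic.
  move=> r r0; apply/seteqP; split => w /=; rewrite !in_itv /= !andbT /V.
    rewrite ltr_pdivlMr // lt_max mulrC => /orP[//|].
    by rewrite ltNge mulr_ge0 // ltW.
  by move=> h; rewrite ltr_pdivlMr // lt_max mulrC h.
pose f := fun r : R => \sum_(j < k) 'C(n.-1, j)%:R * (r ^+ j * (1 - r) ^+ (n - j)).
have e01 : (`[0%R, 1%R] = `[0%R, +oo[ `&` `[0%R, 1%R] :> set R)%classic.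
  apply/seteqP; split => r /=; rewrite !in_itv /= ?andbT.
    by move=> /andP[-> ->].
  by move=> [].
have -> : (\int[lebesgue_measure]_(r in `[0%R, +oo[) ccdf VR r =
           \int[lebesgue_measure]_(r in `[0%R, 1%R]) (f r)%:E)%E.
  rewrite e01 integral_mkcondr; apply: eq_integral => r /[!inE] /=.
  rewrite in_itv /= andbT => r0.
  rewrite patchE; have -> : ccdf VR r = P (VR @^-1` `]r, +oo[)%classic by [].
  rewrite pre //; case: ifPn => [|r1].
    rewrite inE /= in_itv /= => /andP[_ r1].
    by rewrite (P_event (hT := hT)) // r0 r1.
  have r1' : 1 < r by move: r1; rewrite notin_setE /= in_itv /= r0 /= ltNge => /negP.
  apply: (@subset_measure0 _ _ _ P _ (X t @^-1` `]T * r, +oo[)%classic).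
  - by rewrite -[X in measurable X]setTI; apply: mYf => //; exact: measurable_itv.
  - exact: measurable_funPTI.
  - by move=> w /=; rewrite !in_itv /= !andbT /Y_t2 lt_min => /andP[].
  apply: (PX_big (hu t)).
  by rewrite ler_pMr // ltW.
rewrite /f int_poly -EFinM final_alg //.
Qed.
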